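(* There exists $C\in(1,\infty)$ such that for all $m,n,k\in\mathbb N$, $$\P\big(\tau^{(m)}_k\ge n\big)\le\Big(\frac{C\,k\,m}{n(\log m+1)}\wedge1\Big)^{n/m}.$$ Equivalently, for all $m\in\mathbb N$ and $s,t\in(0,\infty)$, $\P\big(\tau^{(m)}_{\lfloor s(\log m+1)\rfloor}\ge tm\big)\le e^{-t\log^+(\frac{t}{Cs})}$.
   Context: Positive reals $r(n)=\frac an(1+o(1))$, $a\in(0,\infty)$, $R_m=\sum_{n\le m}r(n)$; $(T^{(m)}_i)$ i.i.d. with $\P(T^{(m)}_i=n)=\frac{r(n)}{R_m}\mathbf1_{\{1,\dots,m\}}(n)$; $\tau^{(m)}_k=\sum_{i\le k}T^{(m)}_i$. $\log^+x=\max(\log x,0)$. *)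

(* Defs.v *)
From Stdlib Require Import Reals Lra Lia.
Open Scope R_scope.

Fixpoint sum1 (f : nat -> R) (m : nat) : R :=
  match m with
  | O => 0
  | S m' => sum1 f m' + f m
  end.

Definition Rsum (r : nat -> R) (m : nat) : R := sum1 r m.

(* P(T^{(m)} = i) = r(i)/R_m for i in {1..m} *)
Definition stepP (r : nat -> R) (m i : nat) : R := r i / Rsum r m.

(* tailP r m k n = P(tau^{(m)}_k >= n), where tau_k = T_1 + ... + T_k with
   T_i i.i.d. of law stepP r m.  Computed by conditioning on the first step:
   P(tau_0 >= n) = [n = 0];
   P(tau_{k+1} >= n) = sum_{i=1}^m P(T=i) P(tau_k >= n - i)
   (truncated subtraction: tau_k >= 0 always). *)
Fixpoint tailP (r : nat -> R) (m k n : nat) : R :=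
  match k with
  | O => if Nat.eqb n 0 then 1 else 0
  | S k' => sum1 (fun i => stepP r m i * tailP r m k' (n - i)) m
  end.

(* Main.v *)
Require Import Defs.
From Stdlib Require Import Reals Lra Lia.
Open Scope R_scope.

Lemma sum1_le (f g : nat -> R) m :
  (forall i, (1 <= i <= m)%nat -> f i <= g i) -> sum1 f m <= sum1 g m.
Proof.
  induction m; simpl; intros H; [lra|].
  assert (sum1 f m <= sum1 g m) by (apply IHm; intros; apply H; lia).
  assert (f (S m) <= g (S m)) by (apply H; lia). lra.
Qed.

Lemma sum1_ext (f g : nat -> R) m :
  (forall i, (1 <= i <= m)%nat -> f i = g i) -> sum1 f m = sum1 g m.
Proof.
  intros H; apply Rle_antisym; apply sum1_le; intros i Hi; rewrite (H i Hi); lra.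
Qed.

Lemma sum1_scal (f : nat -> R) c m : sum1 (fun i => c * f i) m = c * sum1 f m.
Proof. induction m; simpl; [ring|rewrite IHm; ring]. Qed.

Lemma sum1_plus (f g : nat -> R) m : sum1 (fun i => f i + g i) m = sum1 f m + sum1 g m.
Proof. induction m; simpl; [ring|rewrite IHm; ring]. Qed.

Lemma sum1_nonneg (f : nat -> R) m :
  (forall i, (1 <= i <= m)%nat -> 0 <= f i) -> 0 <= sum1 f m.
Proof.
  intros H. replace 0 with (sum1 (fun _ => 0) m).
  - apply sum1_le; auto.
  - clear H; induction m; simpl; [ring|rewrite IHm; ring].
Qed.

Lemma sum1_term (f : nat -> R) m i :
  (forall i, (1 <= i <= m)%nat -> 0 <= f i) -> (1 <= i <= m)%nat -> f i <= sum1 f m.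
Proof.
  induction m; intros H Hi; [lia|simpl].
  destruct (Nat.eq_dec i (S m)) as [->|ne].
  - assert (0 <= sum1 f m) by (apply sum1_nonneg; intros; apply H; lia). lra.
  - assert (f i <= sum1 f m) by (apply IHm; [intros; apply H; lia|lia]).
    assert (0 <= f (S m)) by (apply H; lia). lra.
Qed.

Lemma tailP_nonneg r m k n :
  (forall i, (1 <= i <= m)%nat -> 0 <= stepP r m i) -> 0 <= tailP r m k n.
Proof.
  intros Hs; revert n; induction k; intros n; simpl.
  - destruct (Nat.eqb n 0); lra.
  - apply sum1_nonneg; intros i Hi.
    apply Rmult_le_pos; [apply Hs; auto| apply IHk].
Qed.

Lemma chernoff r m z k n :
  (forall i, (1 <= i <= m)%nat -> 0 <= stepP r m i) -> 1 <= z ->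
  tailP r m k n * z ^ n <= (sum1 (fun i => stepP r m i * z ^ i) m) ^ k.
Proof.
  intros Hs Hz; revert n; induction k; intros n; simpl.
  - destruct (Nat.eqb_spec n 0) as [->|]; simpl; [lra|].
    assert (0 < z ^ n) by (apply pow_lt; lra). lra.
  - rewrite Rmult_comm, <- sum1_scal.
    set (M := sum1 (fun i => stepP r m i * z ^ i) m).
    replace (M * M ^ k) with (sum1 (fun i => M ^ k * (stepP r m i * z ^ i)) m)
      by (rewrite sum1_scal; unfold M; ring).
    apply sum1_le; intros i Hi.
    assert (h1 := IHk (n - i)%nat).
    assert (h2 : z ^ n <= z ^ (n - i) * z ^ i)
      by (rewrite <- pow_add; apply Rle_pow; [lra|lia]).
    assert (h3 := Hs i Hi).
    assert (h4 := tailP_nonneg r m k (n - i) Hs).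
    assert (0 <= z ^ i) by (apply pow_le; lra).
    assert (tailP r m k (n - i) * z ^ n <= tailP r m k (n - i) * (z ^ (n - i) * z ^ i))
      by (apply Rmult_le_compat_l; auto).
    assert (tailP r m k (n - i) * (z ^ (n - i) * z ^ i) <= M ^ k * z ^ i)
      by (rewrite <- Rmult_assoc; apply Rmult_le_compat_r; auto).
    assert (z ^ n * (stepP r m i * tailP r m k (n - i)) =
            stepP r m i * (tailP r m k (n - i) * z ^ n)) by ring.
    rewrite H2.
    replace (M ^ k * (stepP r m i * z ^ i)) with (stepP r m i * (M ^ k * z ^ i)) by ring.
    apply Rmult_le_compat_l; lra.
Qed.

Lemma geo z i : 1 <= z -> z ^ i - 1 <= INR i * (z - 1) * z ^ i.
Proof.
  intros Hz; induction i; [simpl; lra|].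
  rewrite S_INR. simpl pow.
  assert (1 <= z ^ i) by (apply pow_R1_Rle; lra).
  assert (0 <= INR i) by apply pos_INR.
  assert (z * (z ^ i - 1) <= z * (INR i * (z - 1) * z ^ i)) by (apply Rmult_le_compat_l; lra).
  assert (1 <= z * z ^ i) by nra.
  assert ((z - 1) * 1 <= (z-1) * (z * z ^ i)) by (apply Rmult_le_compat_l; lra).
  nra.
Qed.

Lemma convex z i d : 1 <= z ->
  INR (i + d) * (z ^ i - 1) <= INR i * (z ^ (i + d) - 1).
Proof.
  intros Hz; induction d.
  - rewrite Nat.add_0_r; lra.
  - rewrite Nat.add_succ_r, S_INR. simpl pow.
    assert (g := geo z i Hz).
    assert (z ^ i <= z ^ (i + d)) by (apply Rle_pow; [lra|lia]).
    assert (0 <= INR i) by apply pos_INR.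
    assert (INR i * (z - 1) * z ^ i <= INR i * (z - 1) * z ^ (i + d))
      by (apply Rmult_le_compat_l; [apply Rmult_le_pos; lra| lra]).
    nra.
Qed.

Lemma finite_up (f : nat -> R) N : exists A, forall i, (i < N)%nat -> f i <= A.
Proof.
  induction N.
  - exists 0; intros; lia.
  - destruct IHN as [A HA]. exists (Rmax A (f N)); intros i Hi.
    destruct (Nat.eq_dec i N) as [->|]; [apply Rmax_r|].
    eapply Rle_trans; [apply HA; lia|apply Rmax_l].
Qed.

Lemma finite_low (f : nat -> R) N : (forall i, (1 <= i)%nat -> 0 < f i) ->
  exists c, 0 < c /\ forall i, (1 <= i)%nat -> (i < N)%nat -> c <= f i.
Proof.
  intros Hf; induction N.
  - exists 1; split; [lra|intros; lia].
  - destruct IHN as [c [Hc HA]].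
    destruct N.
    + exists c; split; auto; intros; lia.
    + exists (Rmin c (f (S N))); split.
      * apply Rmin_glb_lt; auto; apply Hf; lia.
      * intros i H1 Hi. destruct (Nat.eq_dec i (S N)) as [->|]; [apply Rmin_r|].
        eapply Rle_trans; [apply Rmin_l|apply HA; lia].
Qed.

Lemma bounds (r : nat -> R) (a : R) : 0 < a ->
  (forall n : nat, (1 <= n)%nat -> 0 < r n) ->
  Un_cv (fun n : nat => r n * INR n / a) 1 ->
  exists A c, 0 < A /\ 0 < c /\ forall i, (1 <= i)%nat -> c <= r i * INR i <= A.
Proof.
  intros Ha Hr Hc.
  destruct (Hc (1/2)) as [N HN]; [lra|].
  destruct (finite_up (fun i => r i * INR i) N) as [A HA].
  destruct (finite_low (fun i => r i * INR i) N) as [c [Hc0 Hcl]].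
  { intros i Hi. apply Rmult_lt_0_compat; auto. apply lt_0_INR; lia. }
  exists (Rmax (Rmax A (3 * a / 2)) 1), (Rmin c (a / 2)). split; [|split].
  - eapply Rlt_le_trans; [|apply Rmax_r]; lra.
  - apply Rmin_glb_lt; lra.
  - intros i Hi. destruct (Nat.lt_ge_cases i N) as [Hl|Hg].
    + split. eapply Rle_trans; [apply Rmin_l|apply Hcl; auto].
      eapply Rle_trans; [apply HA; auto|].
      eapply Rle_trans; [apply Rmax_l|apply Rmax_l].
    + assert (h := HN i Hg). unfold R_dist in h. apply Rabs_def2 in h.
      assert (e : r i * INR i = a * (r i * INR i / a)) by (field; lra).
      split.
      * eapply Rle_trans; [apply Rmin_r|]. rewrite e. nra.
      * eapply Rle_trans; [|apply Rmax_l]. eapply Rle_trans; [|apply Rmax_r].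
        rewrite e. nra.
Qed.

Lemma ln_le x y : 0 < x -> x <= y -> ln x <= ln y.
Proof. intros. destruct (Req_dec x y) as [->|]; [lra|]. left; apply ln_increasing; lra. Qed.

Lemma exp_le x y : x <= y -> exp x <= exp y.
Proof. intros. destruct (Req_dec x y) as [->|]; [lra|]. left; apply exp_increasing; lra. Qed.

Lemma harm_ln m : ln (INR m + 1) <= sum1 (fun i => / INR i) m.
Proof.
  induction m.
  - simpl. rewrite Rplus_0_l, ln_1. lra.
  - cbn [sum1]. rewrite !S_INR.
    assert (hp := pos_INR m).
    assert (e : INR m + 1 + 1 = (INR m + 1) * (1 + / (INR m + 1))) by (field; lra).
    rewrite e, ln_mult; [|lra|].
    2:{ assert (0 < / (INR m + 1)) by (apply Rinv_0_lt_compat; lra). lra. }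
    assert (ln (1 + / (INR m + 1)) <= / (INR m + 1)).
    { rewrite <- (ln_exp (/ (INR m + 1))) at 2. apply ln_le.
      assert (0 < / (INR m + 1)) by (apply Rinv_0_lt_compat; lra). lra.
      apply exp_ineq1_le. }
    lra.
Qed.

Lemma harm_low m : (1 <= m)%nat -> (ln (INR m) + 1) / 2 <= sum1 (fun i => / INR i) m.
Proof.
  intros Hm.
  assert (h1 := harm_ln m).
  assert (h2 : 1 <= sum1 (fun i => / INR i) m).
  { replace 1 with ((fun i => / INR i) 1%nat) by (simpl; field).
    apply (sum1_term (fun i => / INR i)); [|lia]. intros i Hi. left. apply Rinv_0_lt_compat, lt_0_INR; lia. }
  assert (h3 : ln (INR m) <= ln (INR m + 1)).
  { apply ln_le; [apply lt_0_INR; lia|lra]. }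
  lra.
Qed.

Lemma Rdiv_le_0_compat x y : 0 <= x -> 0 < y -> 0 <= x / y.
Proof. intros. unfold Rdiv. apply Rmult_le_pos; auto. left; apply Rinv_0_lt_compat; auto. Qed.

Lemma sum1_const c m : sum1 (fun _ => c) m = INR m * c.
Proof. induction m; [simpl; ring|]. cbn [sum1]. rewrite IHm, S_INR; ring. Qed.

Lemma pow_exp x j : exp x ^ j = exp (INR j * x).
Proof. rewrite <- Rpower_pow by apply exp_pos. unfold Rpower. rewrite ln_exp. reflexivity. Qed.

Theorem mainTheorem14 :
  forall (r : nat -> R) (a : R),
    0 < a ->
    (forall n : nat, (1 <= n)%nat -> 0 < r n) ->
    (* r(n) = (a/n)(1 + o(1)) *)
    Un_cv (fun n : nat => r n * INR n / a) 1 ->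
    exists C : R, 1 < C /\
      forall m n k : nat, (1 <= m)%nat -> (1 <= n)%nat -> (1 <= k)%nat ->
        tailP r m k n <=
        Rpower (Rmin (C * INR k * INR m / (INR n * (ln (INR m) + 1))) 1)
               (INR n / INR m).
Proof.
  intros r a Ha Hr Hcv.
  destruct (bounds r a Ha Hr Hcv) as [A [c [HA [Hc0 Hb]]]].
  assert (HAc : 0 < A / c) by (apply Rdiv_lt_0_compat; lra).
  exists (6 * (A / c) + 2). split; [lra|].
  set (C := 6 * (A / c) + 2).
  intros m n k Hm Hn Hk.
  assert (Hm0 : 0 < INR m) by (apply lt_0_INR; lia).
  assert (Hn0 : 0 < INR n) by (apply lt_0_INR; lia).
  assert (Hk0 : 0 < INR k) by (apply lt_0_INR; lia).
  set (Rm := Rsum r m).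
  assert (Hlnm : 0 <= ln (INR m)).
  { rewrite <- ln_1. apply ln_le; [lra|]. apply (le_INR 1); lia. }
  set (l := ln (INR m) + 1).
  assert (Hl : 1 <= l) by (unfold l; lra).
  assert (HRm : c * l / 2 <= Rm).
  { unfold Rm, Rsum.
    apply Rle_trans with (sum1 (fun i => c * / INR i) m).
    - rewrite sum1_scal. assert (h := harm_low m Hm). unfold l.
      apply Rle_trans with (c * ((ln (INR m) + 1) / 2)); [right; field|].
      apply Rmult_le_compat_l; lra.
    - apply sum1_le; intros i Hi.
      assert (0 < INR i) by (apply lt_0_INR; lia).
      destruct (Hb i ltac:(lia)) as [h1 _].
      apply Rmult_le_reg_r with (INR i); auto.
      rewrite Rmult_assoc, Rinv_l by lra. lra. }
  assert (HRm0 : 0 < Rm) by (apply Rlt_le_trans with (c * l / 2); [|auto]; nra).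
  assert (Hs : forall i, (1 <= i <= m)%nat -> 0 <= stepP r m i).
  { intros i Hi. unfold stepP. left. apply Rdiv_lt_0_compat; [apply Hr; lia|exact HRm0]. }
  assert (Hsum : sum1 (fun i => stepP r m i) m = 1).
  { unfold stepP. fold Rm. transitivity (sum1 (fun i => / Rm * r i) m).
    - apply sum1_ext; intros; unfold Rdiv; ring.
    - rewrite sum1_scal. fold (Rsum r m). fold Rm. field. lra. }
  assert (Hmean : sum1 (fun i => stepP r m i * INR i) m <= INR m * A / Rm).
  { apply Rle_trans with (sum1 (fun _ => A / Rm) m).
    - apply sum1_le; intros i Hi. unfold stepP. fold Rm.
      destruct (Hb i ltac:(lia)) as [_ h2].
      replace (r i / Rm * INR i) with ((r i * INR i) / Rm) by (field; lra).
      unfold Rdiv. apply Rmult_le_compat_r; [left; apply Rinv_0_lt_compat; auto|auto].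
    - rewrite sum1_const. right; field; lra. }
  set (q := C * INR k * INR m / (INR n * l)).
  assert (Hq : 0 < q).
  { unfold q. apply Rdiv_lt_0_compat; [|nra]. unfold C.
    apply Rmult_lt_0_compat; [|auto]. apply Rmult_lt_0_compat; [lra|auto]. }
  destruct (Rle_or_lt 1 q) as [Hq1|Hq1].
  - rewrite Rmin_right by auto. unfold Rpower. rewrite ln_1, Rmult_0_r, exp_0.
    assert (h := chernoff r m 1 k n Hs (Rle_refl 1)).
    rewrite pow1, Rmult_1_r in h.
    rewrite (sum1_ext _ (fun i => stepP r m i)) in h; [| intros; rewrite pow1, Rmult_1_r; reflexivity].
    rewrite Hsum, pow1 in h. exact h.
  - rewrite Rmin_left by lra. unfold Rpower.
    assert (Hlq : ln q < 0) by (rewrite <- ln_1; apply ln_increasing; lra).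
    set (L := 1 - ln q).
    set (z := exp (L / INR m)).
    assert (Hz : 1 <= z).
    { unfold z. rewrite <- exp_0. apply exp_le. apply Rdiv_le_0_compat; unfold L; lra. }
    assert (hc := chernoff r m z k n Hs Hz).
    set (M := sum1 (fun i => stepP r m i * z ^ i) m) in hc.
    assert (HzL : z ^ m = exp L).
    { unfold z. rewrite pow_exp. f_equal. field. lra. }
    assert (HeL : exp L = exp 1 / q).
    { unfold L. unfold Rminus. rewrite exp_plus, <- ln_Rinv, exp_ln by (auto; apply Rinv_0_lt_compat; auto).
      unfold Rdiv; ring. }
    assert (HM1 : M <= 1 + (z ^ m - 1) / INR m * sum1 (fun i => stepP r m i * INR i) m).
    { rewrite <- Hsum at 1. rewrite <- sum1_scal, <- sum1_plus.
      unfold M. apply sum1_le; intros i Hi.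
      assert (hv := convex z i (m - i) Hz).
      replace (i + (m - i))%nat with m in hv by lia.
      assert (h0 := Hs i Hi).
      assert (hzz : z ^ i <= 1 + INR i * (z ^ m - 1) / INR m).
      { apply Rmult_le_reg_l with (INR m); auto.
        replace (INR m * (1 + INR i * (z ^ m - 1) / INR m)) with (INR m + INR i * (z ^ m - 1)) by (field; lra).
        lra. }
      apply Rle_trans with (stepP r m i * (1 + INR i * (z ^ m - 1) / INR m)).
      + apply Rmult_le_compat_l; auto.
      + right; field; lra. }
    assert (Hzm1 : 0 <= z ^ m - 1) by (assert (1 <= z ^ m) by (apply pow_R1_Rle; lra); lra).
    set (U := exp L * (2 * A / (c * l))).
    assert (HMU : M <= 1 + U).
    { eapply Rle_trans; [exact HM1|].
      apply Rplus_le_compat_l.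
      apply Rle_trans with ((z ^ m - 1) / INR m * (INR m * A / Rm)).
      - apply Rmult_le_compat_l; auto. apply Rdiv_le_0_compat; lra.
      - replace ((z ^ m - 1) / INR m * (INR m * A / Rm)) with ((z ^ m - 1) * (A / Rm)) by (field; lra).
        unfold U. rewrite <- HzL.
        apply Rmult_le_compat; try lra.
        + apply Rdiv_le_0_compat; lra.
        + apply Rmult_le_reg_r with Rm; auto.
          replace (A / Rm * Rm) with A by (field; lra).
          apply Rle_trans with (2 * A / (c * l) * (c * l / 2)).
          * right; field; lra.
          * apply Rmult_le_compat_l; auto. apply Rdiv_le_0_compat; nra. }
    assert (HM0 : 0 <= M).
    { unfold M. apply sum1_nonneg; intros i Hi. apply Rmult_le_pos; auto. apply pow_le; lra. }
    assert (HMk : M ^ k <= exp (INR k * U)).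
    { rewrite <- pow_exp. apply pow_incr. split; auto.
      eapply Rle_trans; [exact HMU|]. apply exp_ineq1_le. }
    assert (Hzn : z ^ n = exp (INR n * (L / INR m))) by (unfold z; apply pow_exp).
    assert (Ht : tailP r m k n <= exp (INR k * U - INR n * (L / INR m))).
    { unfold Rminus. rewrite exp_plus, exp_Ropp, <- Hzn.
      assert (0 < z ^ n) by (apply pow_lt; lra).
      apply Rmult_le_reg_r with (z ^ n); auto.
      replace (exp (INR k * U) * / z ^ n * z ^ n) with (exp (INR k * U)) by (field; lra).
      lra. }
    eapply Rle_trans; [exact Ht|]. apply exp_le.
    assert (HkU : INR k * U = 2 * exp 1 * A * INR n / (C * INR m * c)).
    { unfold U. rewrite HeL. unfold q.
      assert (0 < C) by (unfold C; lra).
      field. repeat split; try lra. }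
    rewrite HkU.
    assert (He := exp_le_3).
    assert (HC : 2 * exp 1 * A <= C * c).
    { unfold C. replace ((6 * (A / c) + 2) * c) with (6 * A + 2 * c) by (field; lra).
      nra. }
    assert (2 * exp 1 * A * INR n / (C * INR m * c) <= INR n / INR m).
    { assert (0 < C) by (unfold C; lra).
      apply Rmult_le_reg_r with (C * INR m * c); [apply Rmult_lt_0_compat; [apply Rmult_lt_0_compat|]; lra|].
      replace (2 * exp 1 * A * INR n / (C * INR m * c) * (C * INR m * c)) with (2 * exp 1 * A * INR n) by (field; lra).
      replace (INR n / INR m * (C * INR m * c)) with (C * c * INR n) by (field; lra).
      nra. }
    replace (INR n / INR m * ln q) with (INR n / INR m - INR n * (L / INR m)) by (unfold L; field; lra).
    lra.
Qed.
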